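(* In $M_3(K[T_3])$ the following equalities hold, where $f_{ij}=\frac12(t_it_j+t_jt_i)-\frac13\mathrm{tr}(t_it_j)I$, $f_{iij}=[t_i^2,t_j]$, $f_{132}=[t_1t_3+t_3t_1,t_2]$, $f_{123}=[t_1t_2+t_2t_1,t_3]$: (i) $\mathrm{tr}(t_1t_2t_3)\,t_1=\frac12\big(\mathrm{tr}(t_1^2)[t_2,t_3]-\mathrm{tr}(t_1t_2)[t_1,t_3]+\mathrm{tr}(t_1t_3)[t_1,t_2]\big)$; (ii) $\mathrm{tr}(t_1t_2t_3)[t_1,t_2]=\frac14\big(\mathrm{tr}(t_1t_3)\mathrm{tr}(t_2^2)-\mathrm{tr}(t_1t_2)\mathrm{tr}(t_2t_3)\big)t_1+\frac14\big(\mathrm{tr}(t_1^2)\mathrm{tr}(t_2t_3)-\mathrm{tr}(t_1t_2)\mathrm{tr}(t_1t_3)\big)t_2+\frac14\big(\mathrm{tr}(t_1t_2)^2-\mathrm{tr}(t_1^2)\mathrm{tr}(t_2^2)\big)t_3$; (iii) $\mathrm{tr}(t_1t_2t_3)f_{11}=\frac14\mathrm{tr}(t_1t_3)f_{112}-\frac14\mathrm{tr}(t_1t_2)f_{113}-\frac1{12}\mathrm{tr}(t_1^2)f_{132}+\frac1{12}\mathrm{tr}(t_1^2)f_{123}$; (iv) $\mathrm{tr}(t_1t_2t_3)f_{112}=\frac12\big(\mathrm{tr}(t_1t_3)\mathrm{tr}(t_2^2)-\mathrm{tr}(t_1t_2)\mathrm{tr}(t_2t_3)\big)f_{11}+\f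rac12\big(\mathrm{tr}(t_1^2)\mathrm{tr}(t_2t_3)-\mathrm{tr}(t_1t_2)\mathrm{tr}(t_1t_3)\big)f_{12}+\frac12\big(\mathrm{tr}(t_1t_2)^2-\mathrm{tr}(t_1^2)\mathrm{tr}(t_2^2)\big)f_{13}$.
   Context: $K$ is a field of characteristic $0$. $T_3=\{t^{(k)}_{ij}\mid1\le i<j\le3,\ k=1,2,3\}$ are commuting indeterminates and $t_k\in M_3(K[T_3])$ is the generic skew-symmetric matrix with zero diagonal, $(i,j)$ entry $t^{(k)}_{ij}$ and $(j,i)$ entry $-t^{(k)}_{ij}$ for $i<j$. $I$ is the $3\times3$ identity matrix and $[a,b]=ab-ba$; scalars $\mathrm{tr}(\cdot)\in K[T_3]$ multiply matrices entrywise. *)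

(* Defs.v *)
From HB Require Import structures.
From mathcomp Require Import all_boot all_order all_algebra.
From mathcomp Require Import mpoly.
Set Implicit Arguments. Unset Strict Implicit. Unset Printing Implicit Defensive.
Import Order.TTheory GRing.Theory.
Local Open Scope ring_scope.

(* K[T_3]: polynomial ring in the 9 indeterminates t^(k)_{ij}, 1<=i<j<=3, k=1,2,3.
   Indeterminate t^(k)_{ij} (0-based k, i<j) is 'X_(tvar k i j) with index
   3*k + (i+j-1), i.e. (0,1)|->0, (0,2)|->1, (1,2)|->2 inside block k. *)
Definition KT3 (K : fieldType) := {mpoly K[9]}.

Definition tvar (k i j : 'I_3) : 'I_9 := inord (3 * k + (i + j).-1).

(* generic skew-symmetric 3x3 matrix t_k (k = 0,1,2 stands for t_1,t_2,t_3) *)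
Definition tgen (K : fieldType) (k : 'I_3) : 'M[KT3 K]_3 :=
  \matrix_(i < 3, j < 3)
    (if (i < j)%N then 'X_(tvar k i j)
     else if (j < i)%N then - 'X_(tvar k j i) else 0).

Definition comm3 (K : fieldType) (a b : 'M[KT3 K]_3) : 'M[KT3 K]_3 := a * b - b * a.

Definition kc (K : fieldType) (c : K) : KT3 K := c%:MP.

(* Main.v *)
Require Import Defs.
From HB Require Import structures.
From mathcomp Require Import all_boot all_order all_algebra.
From mathcomp Require Import mpoly.
From mathcomp Require Import ring.
Import GRing.Theory.
Local Open Scope ring_scope.

Section M3.
Variable F : fieldType.

Definition M3 (a b c d e f g h k : F) : 'M[F]_3 :=
  \matrix_(i < 3, j < 3)
    (if i == 0 then (if j == 0 then a else if j == 1 then b else c)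
     else if i == 1 then (if j == 0 then d else if j == 1 then e else f)
     else (if j == 0 then g else if j == 1 then h else k)).

Ltac m3tac := apply/matrixP; case=> [[|[|[|//]]] ?]; case=> [[|[|[|//]]] ?];
  rewrite ?(mxE, big_ord_recr, big_ord0) /=.

Lemma mulM3 a b c d e f g h k a' b' c' d' e' f' g' h' k' :
  M3 a b c d e f g h k * M3 a' b' c' d' e' f' g' h' k' =
  M3 (a*a' + b*d' + c*g') (a*b' + b*e' + c*h') (a*c' + b*f' + c*k')
     (d*a' + e*d' + f*g') (d*b' + e*e' + f*h') (d*c' + e*f' + f*k')
     (g*a' + h*d' + k*g') (g*b' + h*e' + k*h') (g*c' + h*f' + k*k').
Proof. by m3tac; ring. Qed.

Lemma addM3 a b c d e f g h k a' b' c' d' e' f' g' h' k' :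
  M3 a b c d e f g h k + M3 a' b' c' d' e' f' g' h' k' =
  M3 (a+a') (b+b') (c+c') (d+d') (e+e') (f+f') (g+g') (h+h') (k+k').
Proof. by m3tac. Qed.

Lemma oppM3 a b c d e f g h k :
  - M3 a b c d e f g h k = M3 (-a) (-b) (-c) (-d) (-e) (-f) (-g) (-h) (-k).
Proof. by m3tac. Qed.

Lemma scaleM3 x a b c d e f g h k :
  x *: M3 a b c d e f g h k = M3 (x*a) (x*b) (x*c) (x*d) (x*e) (x*f) (x*g) (x*h) (x*k).
Proof. by m3tac. Qed.

Lemma trM3 a b c d e f g h k : \tr (M3 a b c d e f g h k) = a + e + k.
Proof. by rewrite /mxtrace ?(mxE, big_ord_recr, big_ord0) /= add0r. Qed.

Lemma oneM3 : (1 : 'M[F]_3) = M3 1 0 0 0 1 0 0 0 1.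
Proof. by m3tac. Qed.

End M3.
Arguments M3 {F}.

Definition sk (F : fieldType) (a b c : F) : 'M[F]_3 := M3 0 a b (-a) 0 c (-b) (-c) 0.
Arguments sk {F}.

Ltac gentac hn :=
  rewrite /sk; rewrite ?expr2 ?sqrrN ?oneM3;
  rewrite ?(mulM3, addM3, oppM3, scaleM3, trM3);
  congr M3; field; rewrite ?(hn 1%N) ?(hn 2%N) ?(hn 3%N) ?(hn 11%N) //.

Lemma gen1 (F : fieldType) (hn : forall n : nat, n.+1%:R != 0 :> F) (a b c d e f g k l : F) :
  let t1 := sk a b c in let t2 := sk d e f in let t3 := sk g k l in
  \tr (t1 * t2 * t3) *: t1 = 2%:R^-1 *: (\tr (t1 ^+ 2) *: (t2*t3 - t3*t2) - \tr (t1 * t2) *: (t1*t3-t3*t1)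
                      + \tr (t1 * t3) *: (t1*t2-t2*t1)).
Proof. move=> t1 t2 t3; rewrite /t1 /t2 /t3. gentac hn. Qed.


Lemma gen2 (F : fieldType) (hn : forall n : nat, n.+1%:R != 0 :> F) (a b c d e f g k l : F) :
  let t1 := sk a b c in let t2 := sk d e f in let t3 := sk g k l in
  let q := (4%:R^-1 : F) in
  \tr (t1 * t2 * t3) *: (t1 * t2 - t2 * t1) =
        (q * (\tr (t1 * t3) * \tr (t2 ^+ 2) - \tr (t1 * t2) * \tr (t2 * t3))) *: t1
      + (q * (\tr (t1 ^+ 2) * \tr (t2 * t3) - \tr (t1 * t2) * \tr (t1 * t3))) *: t2
      + (q * (\tr (t1 * t2) ^+ 2 - \tr (t1 ^+ 2) * \tr (t2 ^+ 2))) *: t3.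
Proof. move=> t1 t2 t3 q; rewrite /t1 /t2 /t3 /q. gentac hn. Qed.

Lemma gen3 (F : fieldType) (hn : forall n : nat, n.+1%:R != 0 :> F) (a b c d e f g k l : F) :
  let t1 := sk a b c in let t2 := sk d e f in let t3 := sk g k l in
  let h := (2%:R^-1 : F) in let q := (4%:R^-1 : F) in
  let tw := (12%:R^-1 : F) in let th := (3%:R^-1 : F) in
  let cm := fun x y : 'M[F]_3 => x * y - y * x in
  \tr (t1 * t2 * t3) *: (h *: (t1 * t1 + t1 * t1) - (th * \tr (t1 * t1)) *: 1) =
    (q * \tr (t1 * t3)) *: cm (t1 ^+ 2) t2 - (q * \tr (t1 * t2)) *: cm (t1 ^+ 2) t3
  - (tw * \tr (t1 ^+ 2)) *: cm (t1 * t3 + t3 * t1) t2 + (tw * \tr (t1 ^+ 2)) *: cm (t1 * t2 + t2 * t1) t3.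
Proof. move=> t1 t2 t3 h q tw th cm; rewrite /t1 /t2 /t3 /h /q /tw /th /cm. gentac hn. Qed.

Lemma gen4 (F : fieldType) (hn : forall n : nat, n.+1%:R != 0 :> F) (a b c d e f g k l : F) :
  let t1 := sk a b c in let t2 := sk d e f in let t3 := sk g k l in
  let h := (2%:R^-1 : F) in let th := (3%:R^-1 : F) in
  let ff := fun x y : 'M[F]_3 => h *: (x * y + y * x) - (th * \tr (x * y)) *: 1 in
  \tr (t1 * t2 * t3) *: (t1 ^+ 2 * t2 - t2 * t1 ^+ 2) =
        (h * (\tr (t1 * t3) * \tr (t2 ^+ 2) - \tr (t1 * t2) * \tr (t2 * t3))) *: ff t1 t1
      + (h * (\tr (t1 ^+ 2) * \tr (t2 * t3) - \tr (t1 * t2) * \tr (t1 * t3))) *: ff t1 t2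
      + (h * (\tr (t1 * t2) ^+ 2 - \tr (t1 ^+ 2) * \tr (t2 ^+ 2))) *: ff t1 t3.
Proof. move=> t1 t2 t3 h th ff; rewrite /ff /t1 /t2 /t3 /h /th. gentac hn. Qed.

Section Main.
Variable K : fieldType.
Hypothesis hK : [pchar K] =i pred0.
Local Notation FR := {fraction KT3 K}.
Local Notation fr := (@tofrac (KT3 K)).

Lemma hn (n : nat) : (n.+1%:R : FR) != 0.
Proof.
rewrite -(rmorph_nat fr) tofrac_eq0 -(rmorph_nat (@mpolyC 9 K)) mpolyC_eq0.
by move/GRing.pcharf0P: hK => ->.
Qed.

Lemma kcV (n : nat) : fr (kc (n.+1%:R^-1 : K)) = n.+1%:R^-1.
Proof.
have n0 : (n.+1%:R : FR) != 0 := hn n.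
apply: (mulIf n0); rewrite mulVf //.
rewrite -(rmorph_nat fr) -(rmorph_nat (@mpolyC 9 K)) -rmorphM /kc -rmorphM /= mulVf ?rmorph1 //.
by move/GRing.pcharf0P: hK => ->.
Qed.

Lemma tmap (k : 'I_3) : map_mx fr (tgen K k) =
  sk (fr 'X_(tvar k 0 1)) (fr 'X_(tvar k 0 2)) (fr 'X_(tvar k 1 2)).
Proof.
apply/matrixP; case=> [[|[|[|//]]] ?]; case=> [[|[|[|//]]] ?];
  rewrite !mxE /= ?rmorphN ?rmorph0 //.
Qed.

Lemma mapinj : injective (map_mx fr : 'M_3 -> 'M_3).
Proof.
move=> A B eqAB; apply/matrixP => i j.
move/matrixP/(_ i j): eqAB; rewrite !mxE => /eqP; rewrite tofrac_eq => /eqP.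
done.
Qed.

Definition mf (A : 'M[KT3 K]_3) : 'M[FR]_3 := map_mx fr A.
Lemma mfZ c A : mf (c *: A) = fr c *: mf A. Proof. exact: map_mxZ. Qed.
Lemma mfD A B : mf (A + B) = mf A + mf B. Proof. exact: map_mxD. Qed.
Lemma mfN A : mf (- A) = - mf A. Proof. exact: map_mxN. Qed.
Lemma mfM A B : mf (A * B) = mf A * mf B. Proof. exact: map_mxM. Qed.
Lemma mfX A : mf (A ^+ 2) = mf A ^+ 2. Proof. by rewrite !expr2 mfM. Qed.
Lemma mf1 : mf 1 = 1. Proof. exact: map_mx1. Qed.
Lemma mftr A : fr (\tr A) = \tr (mf A). Proof. by rewrite /mf trace_map_mx. Qed.
Lemma mfinj : injective mf. Proof. exact: mapinj. Qed.
Lemma frM (x y : KT3 K) : fr (x * y) = fr x * fr y. Proof. exact: rmorphM. Qed.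
Lemma frB (x y : KT3 K) : fr (x - y) = fr x - fr y. Proof. exact: rmorphB. Qed.
Lemma frX (x : KT3 K) : fr (x ^+ 2) = fr x ^+ 2. Proof. exact: rmorphXn. Qed.

Lemma pushE L L' R R' : mf L = L' -> mf R = R' -> L' = R' -> L = R.
Proof. by move=> <- <- /mfinj. Qed.
Lemma mfZ' c c' A A' : fr c = c' -> mf A = A' -> mf (c *: A) = c' *: A'.
Proof. by move=> <- <-; exact: mfZ. Qed.
Lemma mfD' A A' B B' : mf A = A' -> mf B = B' -> mf (A + B) = A' + B'.
Proof. by move=> <- <-; exact: mfD. Qed.
Lemma mfN' A A' : mf A = A' -> mf (- A) = - A'.
Proof. by move=> <-; exact: mfN. Qed.
Lemma mfM' A A' B B' : mf A = A' -> mf B = B' -> mf (A * B) = A' * B'.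
Proof. by move=> <- <-; exact: mfM. Qed.
Lemma mfX' A A' : mf A = A' -> mf (A ^+ 2) = A' ^+ 2.
Proof. by move=> <-; exact: mfX. Qed.
Lemma frM' x x' y y' : fr x = x' -> fr y = y' -> fr (x * y) = x' * y'.
Proof. by move=> <- <-; exact: rmorphM. Qed.
Lemma frD' x x' y y' : fr x = x' -> fr y = y' -> fr (x + y) = x' + y'.
Proof. by move=> <- <-; exact: rmorphD. Qed.
Lemma frN' x x' : fr x = x' -> fr (- x) = - x'.
Proof. by move=> <-; exact: rmorphN. Qed.
Lemma frX' x x' : fr x = x' -> fr (x ^+ 2) = x' ^+ 2.
Proof. by move=> <-; exact: rmorphXn. Qed.
Lemma frtr' A A' : mf A = A' -> fr (\tr A) = \tr A'.
Proof. by move=> <-; exact: mftr. Qed.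

Ltac pmx := lazymatch goal with
 | |- mf ?X = _ =>
   lazymatch X with
   | @GRing.scale _ _ _ _ => apply: mfZ'; [pfr | pmx]
   | @GRing.add _ _ _ => apply: mfD'; pmx
   | @GRing.opp _ _ => apply: mfN'; pmx
   | @GRing.mul _ _ _ => apply: mfM'; pmx
   | @GRing.exp _ _ 2 => apply: mfX'; pmx
   | @GRing.one _ => exact: mf1
   | _ => eassumption
   end
 end
with pfr := lazymatch goal with
 | |- tofrac ?X = _ =>
   lazymatch X with
   | @GRing.mul _ _ _ => apply: frM'; pfr
   | @GRing.add _ _ _ => apply: frD'; pfr
   | @GRing.opp _ _ => apply: frN'; pfr
   | @GRing.exp _ _ 2 => apply: frX'; pfr
   | @mxtrace _ _ _ => apply: frtr'; pmx
   | _ => eassumption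
   end
 end.

Lemma transfer (t1 t2 t3 : 'M[KT3 K]_3) (h q tw th : KT3 K) (a b c d e f g k l : FR)
  (e1 : mf t1 = sk a b c) (e2 : mf t2 = sk d e f) (e3 : mf t3 = sk g k l)
  (eh : fr h = 2%:R^-1) (eqq : fr q = 4%:R^-1) (etw : fr tw = 12%:R^-1) (eth : fr th = 3%:R^-1) :
  let cm := fun x y : 'M[KT3 K]_3 => x * y - y * x in
  let tr := fun (a : 'M[KT3 K]_3) => \tr a in
    let f := fun a b : 'M[KT3 K]_3 => h *: (a * b + b * a) - (th * tr (a * b)) *: 1 in
  let f11 := f t1 t1 in
  let f12 := f t1 t2 in
  let f13 := f t1 t3 in
  let f112 := cm (t1 ^+ 2) t2 in
  let f113 := cm (t1 ^+ 2) t3 in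
  let f132 := cm (t1 * t3 + t3 * t1) t2 in
  let f123 := cm (t1 * t2 + t2 * t1) t3 in
  let T := tr (t1 * t2 * t3) in
  [/\ T *: t1 = h *: (tr (t1 ^+ 2) *: cm t2 t3 - tr (t1 * t2) *: cm t1 t3
                      + tr (t1 * t3) *: cm t1 t2),
      T *: cm t1 t2 =
        (q * (tr (t1 * t3) * tr (t2 ^+ 2) - tr (t1 * t2) * tr (t2 * t3))) *: t1
      + (q * (tr (t1 ^+ 2) * tr (t2 * t3) - tr (t1 * t2) * tr (t1 * t3))) *: t2
      + (q * (tr (t1 * t2) ^+ 2 - tr (t1 ^+ 2) * tr (t2 ^+ 2))) *: t3,
      T *: f11 = (q * tr (t1 * t3)) *: f112 - (q * tr (t1 * t2)) *: f113
                 - (tw * tr (t1 ^+ 2)) *: f132 + (tw * tr (t1 ^+ 2)) *: f123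
    & T *: f112 =
        (h * (tr (t1 * t3) * tr (t2 ^+ 2) - tr (t1 * t2) * tr (t2 * t3))) *: f11
      + (h * (tr (t1 ^+ 2) * tr (t2 * t3) - tr (t1 * t2) * tr (t1 * t3))) *: f12
      + (h * (tr (t1 * t2) ^+ 2 - tr (t1 ^+ 2) * tr (t2 ^+ 2))) *: f13].
Proof.
have hn' := hn.
cbv zeta beta.
split; (apply: pushE; [pmx | pmx | ]).
- have G := gen1 _ hn' a b c d e f g k l; exact G.
- have G := gen2 _ hn' a b c d e f g k l; exact G.
- have G := gen3 _ hn' a b c d e f g k l; exact G.
- have G := gen4 _ hn' a b c d e f g k l; exact G.
Qed.

End Main.

Theorem proposition5p7 (K : fieldType) (hK : [pchar K] =i pred0) :
  let t1 := tgen K 0 in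
  let t2 := tgen K 1 in
  let t3 := tgen K 2 in
  let tr := fun (a : 'M[KT3 K]_3) => \tr a in
  let h := kc (2%:R^-1 : K) in
  let q := kc (4%:R^-1 : K) in
  let tw := kc (12%:R^-1 : K) in
  let th := kc (3%:R^-1 : K) in
  let f := fun a b : 'M[KT3 K]_3 => h *: (a * b + b * a) - (th * tr (a * b)) *: 1 in
  let f11 := f t1 t1 in
  let f12 := f t1 t2 in
  let f13 := f t1 t3 in
  let f112 := comm3 (t1 ^+ 2) t2 in
  let f113 := comm3 (t1 ^+ 2) t3 in
  let f132 := comm3 (t1 * t3 + t3 * t1) t2 in
  let f123 := comm3 (t1 * t2 + t2 * t1) t3 in
  let T := tr (t1 * t2 * t3) in
  [/\ T *: t1 = h *: (tr (t1 ^+ 2) *: comm3 t2 t3 - tr (t1 * t2) *: comm3 t1 t3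
                      + tr (t1 * t3) *: comm3 t1 t2),
      T *: comm3 t1 t2 =
        (q * (tr (t1 * t3) * tr (t2 ^+ 2) - tr (t1 * t2) * tr (t2 * t3))) *: t1
      + (q * (tr (t1 ^+ 2) * tr (t2 * t3) - tr (t1 * t2) * tr (t1 * t3))) *: t2
      + (q * (tr (t1 * t2) ^+ 2 - tr (t1 ^+ 2) * tr (t2 ^+ 2))) *: t3,
      T *: f11 = (q * tr (t1 * t3)) *: f112 - (q * tr (t1 * t2)) *: f113
                 - (tw * tr (t1 ^+ 2)) *: f132 + (tw * tr (t1 ^+ 2)) *: f123
    & T *: f112 =
        (h * (tr (t1 * t3) * tr (t2 ^+ 2) - tr (t1 * t2) * tr (t2 * t3))) *: f11
      + (h * (tr (t1 ^+ 2) * tr (t2 * t3) - tr (t1 * t2) * tr (t1 * t3))) *: f12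
      + (h * (tr (t1 * t2) ^+ 2 - tr (t1 ^+ 2) * tr (t2 ^+ 2))) *: f13].
Proof.
exact: (@transfer K hK _ _ _ _ _ _ _ _ _ _ _ _ _ _ _ _ (tmap K 0) (tmap K 1) (tmap K 2)
          (kcV K hK 1) (kcV K hK 3) (kcV K hK 11) (kcV K hK 2)).
Qed.
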